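(* Consider the following setting. Participants communicate over a synchronous network: any message sent by an honest participant to another participant (possibly over multiple hops) is delivered within time $\Delta$. A committee has $n = 3f+1$ members, at most $f$ of which are Byzantine (controlled by a single adversary); the remaining members and all other non-adversarial miners are honest and follow the protocol. When an honest committee member commits a consensus decision (in particular a reconfiguration decision) in slot $s$ of view $(c,e,v)$ with value digest $h$, it sends a signed message $\langle\langle \mathsf{notify}, c,e,v,s,h\rangle, \mathcal{C}\rangle$ (where $\mathcal{C}$ is a commit certificate consisting of $2f+1$ matching signed commit messages) to all other committee members and propagates the decision on the peer-to-peer network to all miners. Upon receiving such a $\mathsf{notify}$ message, an honest member commits $h$ and, if it has not already done so, sends and propagates its own $\mathsf{notify}$ message in the same way. The signed inner part $\langle \mathsf{notify}, c,e,v,s,h\rangle$ is called a $\mathsf{notify}$ header. The proof-of-work puzzle for the next configuration, $\mathsf{puzzle}(c+1)$, is defined to be any set of $f+1$ $\mathsf{notify}$ headers (from distinct committee members) for the last reconfiguration decision. Then the adversary learns a puzzle at most $2\Delta$ time earlier than honest miners; that is, if the adversary is able to assemble $\mathsf{puzzle}(c+1)$ at time $t$, then every honest miner is able to assemble $\mathsf{puzzle}(c+1)$ by time $t + 2\Delta$.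
   Context: Signatures are unforgeable, so a $\mathsf{notify}$ header signed by an honest member can only exist if that honest member produced it. Honest members are capable of delivering messages to all other honest participants (members and miners) within $\Delta$. *)

(* Defs.v *)
From mathcomp Require Import all_boot all_order all_algebra.
Set Implicit Arguments. Unset Strict Implicit. Unset Printing Implicit Defensive.
Import Order.TTheory GRing.Theory Num.Theory.
Local Open Scope ring_scope.

(* [has m] : "a valid notify header (for the fixed reconfiguration decision)
   signed by committee member m is held".  puzzle(c+1) can be assembled iff
   f+1 such headers from distinct committee members are held. *)
Definition can_assemble_puzzle (M : finType) (f : nat) (has : M -> Prop) : Prop :=
  exists S : {set M}, #|S| = f.+1 /\ (forall m, m \in S -> has m).

(* Main.v *)
Require Import Defs.
From mathcomp Require Import all_boot all_order all_algebra.
From mathcomp Require Import zify lra.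
Import Order.TTheory GRing.Theory Num.Theory.
Local Open Scope ring_scope.

Lemma pick_subset (M : finType) (A : {set M}) (k : nat) :
  (k <= #|A|)%N -> exists S : {set M}, #|S| = k /\ S \subset A.
Proof.
move=> hk; exists [set x in take k (enum A)]; split.
  have u : uniq (take k (enum A)) by apply: take_uniq; apply: enum_uniq.
  by rewrite cardsE (card_uniqP u) size_takel // -cardE.
by apply/subsetP=> x; rewrite inE => /mem_take; rewrite mem_enum.
Qed.

Theorem lemma1 (R : realDomainType) (M : finType) (Miner : Type) (f : nat) (Delta : R)
  (honest : {set M}) (honest_miner : Miner -> Prop)
  (sent : M -> R -> Prop) (mrecv : M -> M -> R -> Prop)
  (minrecv : Miner -> M -> R -> Prop) (adv : M -> R -> Prop) :
  #|M| = (3 * f).+1 :> nat ->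
  (#|~: honest| <= f)%N ->
  0 <= Delta ->
  (* unforgeable signatures: a header of an honest member exists only once it produced it *)
  (forall m t, m \in honest -> adv m t -> exists2 t0, t0 <= t & sent m t0) ->
  (* synchronous delivery to all honest members within Delta *)
  (forall m t0, m \in honest -> sent m t0 ->
     forall m', m' \in honest -> mrecv m' m (t0 + Delta)) ->
  (* propagation to all honest miners within Delta *)
  (forall m t0, m \in honest -> sent m t0 ->
     forall x, honest_miner x -> minrecv x m (t0 + Delta)) ->
  (* protocol: an honest member receiving a notify commits and sends its own notify
     (if not done already) *)
  (forall m' m t, m' \in honest -> mrecv m' m t -> sent m' t) ->
  (* "received by time t" is monotone in t *)
  (forall x m t t', t <= t' -> minrecv x m t -> minrecv x m t') ->
  forall t, can_assemble_puzzle f (fun m => adv m t) ->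
  forall x, honest_miner x ->
    can_assemble_puzzle f (fun m => minrecv x m (t + 2 * Delta)).
Proof.
move=> hM hB hD unf dlv prop proto mono t [S [hS hadv]] x hx.
have [m0 [m0S m0h]] : exists m0, m0 \in S /\ m0 \in honest.
  case: (boolP [exists m, (m \in S) && (m \in honest)]).
    by move/existsP=> [m /andP[a b]]; exists m.
  move=> hn; exfalso.
  have sub : S \subset ~: honest.
    apply/subsetP=> m mS; rewrite inE; apply/negP=> mh.
    by move/negP: hn; apply; apply/existsP; exists m; rewrite mS mh.
  have := subset_leq_card sub; rewrite hS; lia.
have [t0 t0le s0] := unf _ _ m0h (hadv _ m0S).
have hH : (f.+1 <= #|honest|)%N.
  have := cardsC honest; rewrite hM; lia.
have [S' [hS' sub]] := @pick_subset _ honest _ hH.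
exists S'; split => // m mS'.
have mh : m \in honest by apply: (subsetP sub).
have := prop _ _ mh (proto _ _ _ mh (dlv _ _ m0h s0 _ mh)) _ hx.
apply: mono.
lra.
Qed.
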